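(* Fix the parameters $S_1,\dots,S_{\mathcal K}$, $\lambda_1,\dots,\lambda_{\mathcal K}$ of the storage model in the context. Suppose that the linear system \[ \sum_{j=1}^{\kappa_i}\alpha_{ij}=\lambda_i\ (i=1,\dots,\mathcal K),\qquad \sum_{i=1}^{\mathcal K}\sum_{j=1}^{\kappa_i}\alpha_{ij}\,\delta_{\ell,s^i_j}=\tfrac1n\ (\ell=1,\dots,n) \] has no positive solution $(\alpha_{ij})$ (i.e. no solution with all $\alpha_{ij}>0$). Then for any routing policy $P$, the shape process $\tilde X(t)$ with routing policy $P$ is not positive recurrent.
   Context: Storage model: there are $n$ nodes $\{1,\dots,n\}$ and $\mathcal K\ge1$ non-empty neighborhoods $S_1,\dots,S_{\mathcal K}\subset\{1,\dots,n\}$ with $\bigcup_i S_i=\{1,\dots,n\}$; $\kappa_i=|S_i|$ and $S_i=\{s^i_1,\dots,s^i_{\kappa_i}\}$. Items arrive at $S_i$ as independent Poisson processes with rates $\lambda_i>0$, $\sum_{i=1}^{\mathcal K}\lambda_i=1$. Let $\Lambda_i=\{p\in\mathbb R^{\kappa_i}:p_j\ge0,\sum_j p_j=1\}$. A routing policy is a map $P:\mathbb N^n\to\Lambda_1\times\dots\times\Lambda_{\mathcal K}$ with $P(x+c\mathbf 1)=P(x)$ for all integers $c$; an item arriving at $S_i$ when the configuration is $x$ is stored at node $s^i_j$ with probability $p^{(i)}_j(x)$, independently for each arrival (the policy need not be local). $X(t)$ is the vector of node loads, $M(t)=\frac1n\sum_iX_i(t)$, the shape is $\tilde X(t)=X(t)-M(t)\mathbf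 1$, and $\tilde X^e(m)$ is the shape observed at successive arrival moments. With $\tau=\inf\{m>0:\tilde X^e(m)=0\}$, the process is positive recurrent if $\mathbf E(\tau\mid\tilde X^e(0)=x)<\infty$ for every state $x$. $\delta_{\ell,m}$ is the Kronecker delta. *)

(* Defs.v *)
From HB Require Import structures.
From mathcomp Require Import all_boot all_order all_algebra.
From mathcomp Require Import reals.
Set Implicit Arguments. Unset Strict Implicit. Unset Printing Implicit Defensive.
Import Order.TTheory GRing.Theory Num.Theory.
Local Open Scope ring_scope.

Notation config n := {ffun 'I_n -> nat}.

Definition store n (x : config n) (v : 'I_n) : config n :=
  [ffun u => (x u + (u == v))%N].

Definition shift n (x : config n) (c : nat) : config n :=
  [ffun u => (x u + c)%N].

(* The shape x - M(x) 1 is zero iff all loads are equal. *)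
Definition balanced n (x : config n) : bool :=
  [forall u, forall w, x u == x w].

(* A routing policy P : N^n -> Lambda_1 x ... x Lambda_K, where the
   probability vector p^(i) in Lambda_i is indexed by the nodes of S_i:
   P x i v = probability of storing at node v in S_i (0 outside S_i). *)
Definition routing_policy (R : realType) n K (S : 'I_K -> {set 'I_n})
    (P : config n -> 'I_K -> 'I_n -> R) : Prop :=
  (forall x i v, 0 <= P x i v) /\
  (forall x i v, v \notin S i -> P x i v = 0) /\
  (forall x i, \sum_(v in S i) P x i v = 1) /\
  (forall x (c : nat) i v, P (shift x c) i v = P x i v).

(* surv lam S P m x = probability, starting the embedded chain at a
   configuration x, that the shape is not 0 at any of the arrival moments
   1..m, i.e. P_x(tau > m). *)
Fixpoint surv (R : realType) n K (lam : 'I_K -> R) (S : 'I_K -> {set 'I_n})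
    (P : config n -> 'I_K -> 'I_n -> R) (m : nat) (x : config n) : R :=
  match m with
  | O => 1
  | m'.+1 => \sum_(i < K) lam i * \sum_(v in S i)
      P x i v * (if balanced (store x v) then 0
                 else surv lam S P m' (store x v))
  end.

(* E(tau | start at x) < oo, using E tau = sum_{m>=0} P(tau > m)
   (valid for N u {oo}-valued tau); nonnegative terms, so finiteness
   is boundedness of the partial sums. *)
Definition finite_mean_return (R : realType) n K (lam : 'I_K -> R)
    (S : 'I_K -> {set 'I_n}) (P : config n -> 'I_K -> 'I_n -> R)
    (x : config n) : Prop :=
  exists B : R, forall N : nat, \sum_(m < N) surv lam S P m x <= B.

Definition positive_recurrent (R : realType) n K (lam : 'I_K -> R)
    (S : 'I_K -> {set 'I_n}) (P : config n -> 'I_K -> 'I_n -> R) : Prop :=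
  forall x : config n, finite_mean_return lam S P x.

(* Main.v *)
Require Import Defs.
From HB Require Import structures.
From mathcomp Require Import all_boot all_order all_algebra.
From mathcomp Require Import reals.
From mathcomp Require Import ring lra zify.
Import Order.TTheory GRing.Theory Num.Theory.
Local Open Scope ring_scope.
Set Implicit Arguments. Unset Strict Implicit. Unset Printing Implicit Defensive.

Definition Asum (R : realFieldType) K n (S : 'I_K -> {set 'I_n}) (a : 'I_K -> R)
  (T : {set 'I_n}) : R := \sum_i (S i \subset T)%:R * a i.
Definition Bsum (R : realFieldType) n (b : 'I_n -> R) (T : {set 'I_n}) : R :=
  \sum_j (j \in T)%:R * b j.

Lemma hall_base (R : realFieldType) K n (S : 'I_K -> {set 'I_n}) (a : 'I_K -> R) (b : 'I_n -> R) :
  (forall i, S i = set0) ->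
  (forall i, 0 <= a i) -> (forall j, 0 <= b j) ->
  \sum_i a i = \sum_j b j ->
  (forall T, Asum S a T <= Bsum b T) ->
  exists alpha : 'I_K -> 'I_n -> R,
   [/\ (forall i j, 0 <= alpha i j), (forall i j, j \notin S i -> alpha i j = 0),
    (forall i, \sum_j alpha i j = a i) & (forall j, \sum_i alpha i j = b j)].
Proof.
move=> hS ha hb hab hH.
have hA : \sum_i a i = 0.
  apply/le_anti; apply/andP; split; last by apply: sumr_ge0.
  have := hH set0; rewrite /Asum /Bsum [X in _ <= X]big1; last by move=> j _; rewrite in_set0 mul0r.
  by under eq_bigr => i _ do rewrite hS subxx mul1r.
have ha0 i : a i = 0 by apply: (psumr_eq0P (fun i _ => ha i) hA).
have hb0 j : b j = 0 by rewrite hA in hab; apply: (psumr_eq0P (fun j _ => hb j) (esym hab)).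
exists (fun _ _ => 0); split => //.
- by move=> i; rewrite big1 ?ha0.
- by move=> j; rewrite big1 ?hb0.
Qed.

Lemma sum_if_eq (R : realFieldType) (I : finType) (j0 : I) (c : R) :
  \sum_j (if j == j0 then c else 0) = c.
Proof. by rewrite (bigD1 j0) //= eqxx big1 ?addr0 // => j /negbTE ->. Qed.

Lemma rest_mono (R : realFieldType) K n (S : 'I_K -> {set 'I_n}) (a : 'I_K -> R)
  (P : pred 'I_K) (T1 T2 : {set 'I_n}) : (forall i, 0 <= a i) -> T1 \subset T2 ->
  \sum_(i | P i) (S i \subset T1)%:R * a i <= \sum_(i | P i) (S i \subset T2)%:R * a i.
Proof.
move=> ha h12; apply: ler_sum => i _; apply: ler_wpM2r => //; rewrite ler_nat.
by case: (S i \subset T1) /idP => //= h; rewrite (subset_trans h h12).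
Qed.

Lemma rest_super (R : realFieldType) K n (S : 'I_K -> {set 'I_n}) (a : 'I_K -> R)
  (P : pred 'I_K) (T1 T2 : {set 'I_n}) : (forall i, 0 <= a i) ->
  \sum_(i | P i) (S i \subset T1)%:R * a i + \sum_(i | P i) (S i \subset T2)%:R * a i <=
  \sum_(i | P i) (S i \subset T1 :|: T2)%:R * a i + \sum_(i | P i) (S i \subset T1 :&: T2)%:R * a i.
Proof.
move=> ha; rewrite -!big_split /=; apply: ler_sum => i _; rewrite -!mulrDl.
apply: ler_wpM2r => //; rewrite -!natrD ler_nat subsetI.
have hU1 : S i \subset T1 -> S i \subset T1 :|: T2 by move=> h; apply: subset_trans h (subsetUl _ _).
have hU2 : S i \subset T2 -> S i \subset T1 :|: T2 by move=> h; apply: subset_trans h (subsetUr _ _).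
case: (S i \subset T1) /idP => h1; case: (S i \subset T2) /idP => h2 //=.
- by rewrite hU1.
- by rewrite hU1.
- by rewrite hU2.
Qed.

Lemma Bsum_mod (R : realFieldType) n (b : 'I_n -> R) (T1 T2 : {set 'I_n}) :
  Bsum b T1 + Bsum b T2 = Bsum b (T1 :|: T2) + Bsum b (T1 :&: T2).
Proof.
rewrite /Bsum -!big_split /=; apply: eq_bigr => j _; rewrite -!mulrDl !inE.
by case: (j \in T1); case: (j \in T2); rewrite /= ?addr0 ?add0r.
Qed.

Lemma hall_feas (R : realFieldType) K n (E : nat) : forall (S : 'I_K -> {set 'I_n})
  (a : 'I_K -> R) (b : 'I_n -> R),
  (\sum_i #|S i| <= E)%N ->
  (forall i, 0 <= a i) -> (forall j, 0 <= b j) ->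
  \sum_i a i = \sum_j b j ->
  (forall T, Asum S a T <= Bsum b T) ->
  exists alpha : 'I_K -> 'I_n -> R,
   [/\ (forall i j, 0 <= alpha i j), (forall i j, j \notin S i -> alpha i j = 0),
    (forall i, \sum_j alpha i j = a i) & (forall j, \sum_i alpha i j = b j)].
Proof.
elim: E => [|E IH] S a b hE ha hb hab hH.
  apply: hall_base => // i; apply/eqP; rewrite -cards_eq0.
  have : (#|S i| <= \sum_i #|S i|)%N by rewrite (bigD1 i) //= leq_addr.
  lia.
case: (pickP (fun p : 'I_K * 'I_n => p.2 \in S p.1)) => [[i0 j0] /= hij | hnone]; last first.
  apply: hall_base => // i; apply/setP => j; rewrite in_set0; exact: (hnone (i, j)).
pose S' := fun i => if i == i0 then S i :\ j0 else S i.
have hS'i i : i != i0 -> S' i = S i by move=> /negbTE h; rewrite /S' h.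
have hS'0 : S' i0 = S i0 :\ j0 by rewrite /S' eqxx.
have hE' : (\sum_i #|S' i| <= E)%N.
  rewrite (bigD1 i0) //= hS'0 (eq_bigr (fun i => #|S i|)) => [|i /hS'i -> //].
  move: hE; rewrite (bigD1 i0) //= (cardsD1 j0 (S i0)) hij add1n ltnS; exact.
pose g T := Asum S a T + a i0 - Bsum b T.
pose eps := \big[Num.max/0]_(T : {set 'I_n} | (j0 \notin T) && (S i0 :\ j0 \subset T)) g T.
pose Rst (T : {set 'I_n}) := \sum_(i | i != i0) (S i \subset T)%:R * a i.
have hsplit T : Asum S a T = (S i0 \subset T)%:R * a i0 + Rst T by rewrite /Asum (bigD1 i0).
have notT (T : {set 'I_n}) : j0 \notin T -> (S i0 \subset T) = false.
  move=> h; apply/negbTE; apply/negP => hs; move: (subsetP hs j0 hij); by rewrite (negbTE h).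
have hsub (T : {set 'I_n}) : S i0 :\ j0 \subset T -> S i0 \subset j0 |: T.
  move=> h; apply/subsetP => j hj; rewrite in_setU1; case: (eqVneq j j0) => //= hne.
  by apply: (subsetP h); rewrite in_setD1 hne.
have eps0 : 0 <= eps by apply: bigmax_ge_id.
have hlo (T : {set 'I_n}) : j0 \notin T -> S i0 :\ j0 \subset T -> g T <= eps.
  by move=> h1 h2; apply: le_bigmax_cond; rewrite h1 h2.
have eps_a : eps <= a i0.
  by apply: bigmax_le => // T /andP [h1 h2]; rewrite /g; have := hH T; lra.
have eps_b : eps <= b j0.
  apply: bigmax_le => // T /andP [h1 h2].
  have h3 := hH (j0 |: T).
  have e1 : Bsum b (j0 |: T) = b j0 + Bsum b T.
    rewrite /Bsum (bigD1 j0) //= setU11 mul1r; congr (_ + _).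
    rewrite [in RHS](bigD1 j0) //= (negbTE h1) mul0r add0r; apply: eq_bigr => j hj.
    by rewrite in_setU1 (negbTE hj).
  have hm : Rst T <= Rst (j0 |: T) by apply: rest_mono => //; exact: subsetUr.
  move: h3; rewrite /g e1 !hsplit (notT T h1) (hsub _ h2) mul0r mul1r; lra.
have eps_sl (T : {set 'I_n}) : j0 \in T -> ~~ (S i0 \subset T) -> eps <= Bsum b T - Asum S a T.
  move=> hT hnT; apply: bigmax_le; first by have := hH T; lra.
  move=> T1 /andP [h1 h2].
  have hU := hH (T1 :|: T). have hI := hH (T1 :&: T).
  have hmod := Bsum_mod b T1 T.
  have hsup := rest_super S (fun i => i != i0) T1 T ha.
  have eU : S i0 \subset T1 :|: T.
    apply: subset_trans (hsub _ h2) _; apply/subsetP => j; rewrite in_setU1 in_setU.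
    by case/orP => [/eqP -> | ->]; rewrite ?hT ?orbT.
  have hI0 : 0 <= (S i0 \subset T1 :&: T)%:R * a i0 by apply: mulr_ge0.
  rewrite /g !hsplit in hU hI *.
  rewrite (notT _ h1) (negbTE hnT) eU mul0r mul1r in hU *.
  rewrite /Rst in hU hI *; lra.
pose a' i := if i == i0 then a i - eps else a i.
pose b' j := if j == j0 then b j - eps else b j.
have hH' (T : {set 'I_n}) : Asum S' a' T <= Bsum b' T.
  have eA : Asum S' a' T = (S i0 :\ j0 \subset T)%:R * (a i0 - eps) + Rst T.
    rewrite /Asum (bigD1 i0) //= hS'0 /a' eqxx; congr (_ + _); apply: eq_bigr => i hi.
    by rewrite hS'i // (negbTE hi).
  have eB : Bsum b' T = Bsum b T - (j0 \in T)%:R * eps.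
    rewrite /Bsum (bigD1 j0) //= [in RHS](bigD1 j0) //= /b' eqxx.
    rewrite (eq_bigr (fun j => (j \in T)%:R * b j)) => [|j /negbTE -> //]; ring.
  rewrite eA eB; have hT := hH T; rewrite hsplit in hT.
  case hj: (j0 \in T).
  - have e : (S i0 :\ j0 \subset T) = (S i0 \subset T).
      apply/idP/idP => h; last exact: subset_trans (subD1set _ _) h.
      apply/subsetP => j hj'; case: (eqVneq j j0) => [-> //|hne].
      by apply: (subsetP h); rewrite in_setD1 hne hj'.
    rewrite e; case hs: (S i0 \subset T); rewrite hs in hT.
    + rewrite /= ?mulr1n ?mulr0n ?mul1r ?mul0r in hT *; lra.
    + have := eps_sl T hj (negbT hs); rewrite hsplit hs.
      rewrite /= ?mulr1n ?mulr0n ?mul1r ?mul0r in hT *; lra.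
  - rewrite notT ?hj // in hT.
    case hs: (S i0 :\ j0 \subset T).
    + have := hlo T (negbT hj) hs; rewrite /g hsplit notT ?hj //.
      rewrite /= ?mulr1n ?mulr0n ?mul1r ?mul0r in hT *; lra.
    + rewrite /= ?mulr1n ?mulr0n ?mul1r ?mul0r in hT *; lra.
have ha' i : 0 <= a' i by rewrite /a'; case: ifP => [/eqP -> | _]; [lra | exact: ha].
have hb' j : 0 <= b' j by rewrite /b'; case: ifP => [/eqP -> | _]; [lra | exact: hb].
have sa : \sum_i a' i = \sum_i a i - eps.
  rewrite (bigD1 i0) //= [in RHS](bigD1 i0) //= /a' eqxx.
  rewrite (eq_bigr a) => [|i /negbTE -> //]; lra.
have sb : \sum_j b' j = \sum_j b j - eps.
  rewrite (bigD1 j0) //= [in RHS](bigD1 j0) //= /b' eqxx.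
  rewrite (eq_bigr b) => [|j /negbTE -> //]; lra.
have hab' : \sum_i a' i = \sum_j b' j by rewrite sa sb hab.
have [alpha [h1 h2 h3 h4]] := IH S' a' b' hE' ha' hb' hab' hH'.
exists (fun i j => alpha i j + (if (i == i0) && (j == j0) then eps else 0)); split.
- by move=> i j; apply: addr_ge0 => //; case: ifP.
- move=> i j hj; rewrite h2; last by rewrite /S'; case: ifP => // _; rewrite in_setD1 (negbTE hj) andbF.
  case: ifP => [/andP [/eqP hi /eqP hj']|]; last by rewrite addr0.
  by move: hj; rewrite hi hj' hij.
- move=> i; rewrite big_split /= h3; case: (eqVneq i i0) => [->|hne].
    by rewrite /= sum_if_eq /a' eqxx; lra.
  by rewrite /= big1 // addr0 /a' (negbTE hne).
- move=> j; rewrite big_split /= h4; case: (eqVneq j j0) => [->|hne].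
    under eq_bigr => i _ do rewrite andbT.
    by rewrite sum_if_eq /b' eqxx; lra.
  under eq_bigr => i _ do rewrite andbF.
  by rewrite big1 // addr0 /b' (negbTE hne).
Qed.

Lemma exists_small (R : realFieldType) (I : finType) (P : pred I) (f : I -> R) :
  (forall i, P i -> 0 < f i) -> exists2 e : R, 0 < e & forall i, P i -> e <= f i.
Proof.
move=> hf; exists (\big[Num.min/1]_(i | P i) f i).
  by elim/big_ind: _ => // x y hx hy; rewrite lt_min hx hy.
by move=> i hi; apply: bigmin_le_cond.
Qed.

Lemma sum_ind_card (R : realFieldType) n (A : {set 'I_n}) :
  \sum_l ((l \in A)%:R : R) = #|A|%:R.
Proof.
rewrite -sumr_const [RHS]big_mkcond /=; apply: eq_bigr => l _.
by case: (l \in A).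
Qed.

Lemma pos_sol (R : realFieldType) K n (S : 'I_K -> {set 'I_n}) (lam : 'I_K -> R) :
  (0 < n)%N -> (forall i, S i != set0) -> (forall i, 0 < lam i) -> \sum_i lam i = 1 ->
  (forall T : {set 'I_n}, T != set0 -> T != setT -> Asum S lam T < #|T|%:R / n%:R) ->
  exists alpha : 'I_K -> 'I_n -> R,
   [/\ (forall i v, v \in S i -> 0 < alpha i v), (forall i v, v \notin S i -> alpha i v = 0),
    (forall i, \sum_v alpha i v = lam i) & (forall l, \sum_i alpha i l = n%:R^-1)].
Proof.
move=> hn hS hlam hsum hstr.
have [e1 he1 hle1] : exists2 e : R, 0 < e & forall T : {set 'I_n},
    (T != set0) && (T != setT) -> e <= #|T|%:R / n%:R - Asum S lam T.
  by apply: exists_small => T /andP [h1 h2]; rewrite subr_gt0; exact: hstr.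
have [e2 he2 hle2] := @exists_small R _ predT lam (fun i _ => hlam i).
pose M := (\sum_i #|S i|)%N.
have hn0 : (n%:R : R) != 0 by rewrite pnatr_eq0 -lt0n.
have hni : 0 < (n%:R : R)^-1 by rewrite invr_gt0 ltr0n.
pose c := Num.min e1 (Num.min e2 n%:R^-1).
have hc : 0 < c by rewrite /c !lt_min he1 he2 hni.
have hc1 : c <= e1 by rewrite /c !ge_min lexx.
have hc2 : c <= e2 by rewrite /c !ge_min lexx ?orbT.
have hc3 : c <= n%:R^-1 by rewrite /c !ge_min lexx ?orbT.
pose eps := c / (M.+1)%:R.
have heps : 0 < eps by rewrite /eps divr_gt0 // ltr0Sn.
have hepsM x : 0 <= x -> x <= M%:R -> eps * x <= c.
  move=> hx0 hx; rewrite /eps mulrAC ler_pdivrMr ?ltr0Sn //.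
  apply: ler_wpM2l; first exact: ltW.
  apply: (le_trans hx); rewrite ler_nat; lia.
have hSM i : (#|S i| <= M)%N by rewrite /M (bigD1 i) //= leq_addr.
pose d l := \sum_i ((l \in S i)%:R : R).
have hd0 l : 0 <= d l by apply: sumr_ge0 => i _; apply: ler0n.
have hd l : d l <= M%:R.
  rewrite /d -natr_sum ler_nat /M; apply: leq_sum => i _.
  case: (l \in S i) /idP => //= h; rewrite card_gt0; apply/set0Pn; by exists l.
have hdsum : \sum_l d l = M%:R.
  rewrite /d exchange_big /= /M natr_sum; apply: eq_bigr => i _; exact: sum_ind_card.
pose a' i := lam i - eps * #|S i|%:R.
pose b' l := n%:R^-1 - eps * d l.
have ha' i : 0 <= a' i.
  have := hepsM #|S i|%:R (ler0n _ _) (ltac:(rewrite ler_nat; exact: hSM i)).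
  have := hle2 i isT; rewrite /a'; lra.
have hb' l : 0 <= b' l.
  have := hepsM (d l) (hd0 l) (hd l); rewrite /b'; lra.
have sa : \sum_i a' i = 1 - eps * M%:R.
  by rewrite /a' sumrB -mulr_sumr -natr_sum hsum.
have sn : \sum_(l < n) (n%:R^-1 : R) = 1.
  by rewrite sumr_const card_ord -[_ *+ n]mulr_natr mulVf.
have sb : \sum_l b' l = 1 - eps * M%:R.
  by rewrite /b' sumrB -mulr_sumr hdsum sn.
have hH T : Asum S a' T <= Bsum b' T.
  case: (eqVneq T set0) => [-> | hT0].
    rewrite /Asum /Bsum !big1 // => [l _|i _]; first by rewrite in_set0 mul0r.
    by rewrite subset0 (negbTE (hS i)) mul0r.
  case: (eqVneq T setT) => [-> | hT1].
    rewrite /Asum /Bsum (eq_bigr a') => [|i _]; last by rewrite subsetT mul1r.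
    rewrite (eq_bigr b') => [|l _]; last by rewrite in_setT mul1r.
    by rewrite sa sb.
  have h1 : Asum S a' T <= Asum S lam T.
    rewrite /Asum; apply: ler_sum => i _; apply: ler_wpM2l; first exact: ler0n.
    rewrite /a'; have := mulr_ge0 (ltW heps) (ler0n R #|S i|); lra.
  have h2 : #|T|%:R / n%:R - eps * M%:R <= Bsum b' T.
    have e : #|T|%:R / n%:R = \sum_l (l \in T)%:R * (n%:R : R)^-1.
      by rewrite -mulr_suml sum_ind_card.
    rewrite e -hdsum mulr_sumr -sumrB /Bsum; apply: ler_sum => l _; rewrite /b'.
    have := mulr_ge0 (ltW heps) (hd0 l).
    case: (l \in T) => /=; rewrite ?mulr1n ?mulr0n ?mul1r ?mul0r; lra.
  have h3 : e1 <= #|T|%:R / n%:R - Asum S lam T by apply: hle1; rewrite hT0 hT1.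
  have h4 := hepsM M%:R (ler0n _ _) (lexx _).
  lra.
have [alpha [h1 h2 h3 h4]] := @hall_feas R K n M S a' b' (leqnn _) ha' hb'
  (ltac:(by rewrite sa sb)) hH.
exists (fun i v => alpha i v + (v \in S i)%:R * eps); split.
- move=> i v hv; rewrite hv /= mulr1n mul1r; have := h1 i v; lra.
- by move=> i v hv; rewrite h2 // (negbTE hv) /= mulr0n mul0r addr0.
- by move=> i; rewrite big_split /= h3 -mulr_suml sum_ind_card /a'; ring.
- by move=> l; rewrite big_split /= h4 -mulr_suml /b' /d; ring.
Qed.

Lemma harm (R : realFieldType) k : k%:R / 2 <= \sum_(m < 2 ^ k) ((m.+1)%:R : R)^-1.
Proof.
elim: k => [|k IH]; first by rewrite mul0r; apply: sumr_ge0 => i _; rewrite invr_ge0 ler0n.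
rewrite expnS mul2n -addnn big_split_ord /=.
have h2 : \sum_(i < 2 ^ k) ((2 ^ k.+1)%:R : R)^-1 <= \sum_(i < 2 ^ k) ((2 ^ k + i).+1%:R : R)^-1.
  apply: ler_sum => i _.
  rewrite lef_pV2 ?posrE ?ltr0Sn ?ltr0n ?expn_gt0 // ler_nat expnS.
  by have := ltn_ord i; lia.
have e : \sum_(i < 2 ^ k) ((2 ^ k.+1)%:R : R)^-1 = 1 / 2.
  rewrite sumr_const card_ord -mulr_natr expnS natrM; field; by rewrite pnatr_eq0 expn_eq0.
rewrite -natr1; lra.
Qed.

Definition Yf (R : realType) n (L : {set 'I_n}) (x : config n) : R :=
  \sum_(l in L) (x l)%:R - (#|L|%:R / n%:R) * \sum_l (x l)%:R.

Lemma Y_bal (R : realType) n (L : {set 'I_n}) (x : config n) :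
  (0 < n)%N -> balanced x -> Yf R L x = 0.
Proof.
move=> hn hb; pose u0 := Ordinal hn.
have hx u : x u = x u0 by move/forallP: hb => /(_ u) /forallP /(_ u0) /eqP.
rewrite /Yf (eq_bigr (fun _ => (x u0)%:R)) => [|l _]; last by rewrite hx.
rewrite [X in _ * X](eq_bigr (fun _ => (x u0)%:R)) => [|l _]; last by rewrite hx.
rewrite !sumr_const card_ord; set a := (x u0)%:R.
rewrite -[a *+ #|L|]mulr_natr -[a *+ n]mulr_natr; field.
by rewrite pnatr_eq0 -lt0n.
Qed.

Lemma sum_eq_in (R : realType) n (L : {set 'I_n}) v :
  \sum_(l in L) (((l == v) : nat)%:R : R) = (v \in L)%:R.
Proof.
case hv: (v \in L).
  by rewrite (bigD1 v) //= eqxx big1 ?addr0 // => l /andP [_ /negbTE ->].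
rewrite big1 // => l hl; have /negbTE -> : l != v by apply/eqP => e; rewrite -e hl in hv.
by [].
Qed.

Lemma Y_store (R : realType) n (L : {set 'I_n}) (x : config n) v :
  Yf R L (store x v) = Yf R L x + ((v \in L)%:R - #|L|%:R / n%:R).
Proof.
rewrite /Yf.
under eq_bigr => l _ do rewrite /store ffunE natrD.
under [X in _ * X]eq_bigr => l _ do rewrite /store ffunE natrD.
rewrite !big_split /= sum_eq_in.
have -> : \sum_(l < n) (((l == v) : nat)%:R : R) = 1.
  by rewrite (bigD1 v) //= eqxx big1 ?addr0 // => l /negbTE ->.
ring.
Qed.

Fixpoint Vf (R : realType) n K (lam : 'I_K -> R) (S : 'I_K -> {set 'I_n})
    (P : config n -> 'I_K -> 'I_n -> R) (L : {set 'I_n}) (m : nat) (x : config n) : R :=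
  match m with
  | O => Yf R L x
  | m'.+1 => \sum_(i < K) lam i * \sum_(v in S i)
      P x i v * (if balanced (store x v) then 0 else Vf lam S P L m' (store x v))
  end.

Lemma surv_ge0 (R : realType) n K (lam : 'I_K -> R) (S : 'I_K -> {set 'I_n})
    (P : config n -> 'I_K -> 'I_n -> R) :
  routing_policy S P -> (forall i, 0 <= lam i) -> forall m x, 0 <= surv lam S P m x.
Proof.
move=> [hP0 _] hl; elim=> [|m IH] x /=; first exact: ler01.
apply: sumr_ge0 => i _; apply: mulr_ge0 => //; apply: sumr_ge0 => v _.
by apply: mulr_ge0 => //; case: ifP.
Qed.

Lemma drift (R : realType) n K (lam : 'I_K -> R) (S : 'I_K -> {set 'I_n})
    (P : config n -> 'I_K -> 'I_n -> R) (L : {set 'I_n}) (x : config n) :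
  routing_policy S P -> (forall i, 0 <= lam i) -> \sum_i lam i = 1 ->
  #|L|%:R / n%:R <= Asum S lam L ->
  Yf R L x <= \sum_i lam i * \sum_(v in S i) P x i v * Yf R L (store x v).
Proof.
move=> [hP0 [_ [hP1 _]]] hl hs hq.
set q : R := #|L|%:R / n%:R.
pose w i := \sum_(v in S i) P x i v * (v \in L)%:R.
have e i : \sum_(v in S i) P x i v * Yf R L (store x v) = Yf R L x + w i - q.
  under eq_bigr => v _ do rewrite Y_store.
  rewrite (eq_bigr (fun v => P x i v * Yf R L x + P x i v * (v \in L)%:R - P x i v * q));
    last by move=> v _; rewrite -/q; ring.
  by rewrite sumrB big_split /= -!mulr_suml hP1; rewrite /w; ring.
under eq_bigr => i _ do rewrite e.
rewrite (eq_bigr (fun i => lam i * Yf R L x + lam i * w i - lam i * q));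
  last by move=> i _; ring.
rewrite sumrB big_split /= -!mulr_suml hs.
have : Asum S lam L <= \sum_i lam i * w i.
  rewrite /Asum; apply: ler_sum => i _.
  case hsub: (S i \subset L).
    have hw : w i = \sum_(v in S i) P x i v.
      by apply: eq_bigr => v hv; rewrite (subsetP hsub v hv) /= mulr1n mulr1.
    by rewrite hw hP1 /= mulr1n mul1r mulr1.
  rewrite /= mulr0n mul0r; apply: mulr_ge0 => //; apply: sumr_ge0 => v _.
  by apply: mulr_ge0 => //; apply: ler0n.
move=> h; have hq' : q <= Asum S lam L by []. lra.
Qed.

Lemma V_ge_Y (R : realType) n K (lam : 'I_K -> R) (S : 'I_K -> {set 'I_n})
    (P : config n -> 'I_K -> 'I_n -> R) (L : {set 'I_n}) :
  (0 < n)%N -> routing_policy S P -> (forall i, 0 <= lam i) -> \sum_i lam i = 1 ->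
  #|L|%:R / n%:R <= Asum S lam L ->
  forall m x, Yf R L x <= Vf lam S P L m x.
Proof.
move=> hn hP hl hs hq; elim=> [|m IH] x /=; first exact: lexx.
apply: le_trans (drift x hP hl hs hq) _.
apply: ler_sum => i _; apply: ler_wpM2l => //; apply: ler_sum => v _.
apply: ler_wpM2l; first by case: hP => h0 _; apply: h0.
by case: ifP => hb; [rewrite Y_bal | apply: IH].
Qed.

Lemma V_le (R : realType) n K (lam : 'I_K -> R) (S : 'I_K -> {set 'I_n})
    (P : config n -> 'I_K -> 'I_n -> R) (L : {set 'I_n}) :
  (0 < n)%N -> routing_policy S P -> (forall i, 0 <= lam i) ->
  forall m x, Vf lam S P L m x <= (`|Yf R L x| + m%:R) * surv lam S P m x.
Proof.
move=> hn hP hl.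
have hq0 : 0 <= (#|L|%:R / n%:R : R) by apply: divr_ge0; apply: ler0n.
have hq1 : (#|L|%:R / n%:R : R) <= 1.
  by rewrite ler_pdivrMr ?ltr0n // mul1r ler_nat -[X in (_ <= X)%N]card_ord max_card.
have hstep x v : `|Yf R L (store x v)| <= `|Yf R L x| + 1.
  rewrite Y_store; apply: le_trans (ler_normD _ _) _; rewrite lerD2l ler_norml.
  by case: (v \in L); rewrite /= ?mulr1n ?mulr0n; apply/andP; split; lra.
elim=> [|m IH] x /=; first by rewrite addr0 mulr1 ler_norm.
rewrite mulr_sumr; apply: ler_sum => i _; rewrite mulrCA; apply: ler_wpM2l => //.
rewrite mulr_sumr; apply: ler_sum => v _; rewrite mulrCA.
apply: ler_wpM2l; first by case: hP => h0 _; apply: h0.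
case: ifP => _; first by rewrite mulr0.
apply: le_trans (IH _) _; apply: ler_wpM2r; first exact: surv_ge0.
have := hstep x v; rewrite -natr1; lra.
Qed.

Lemma not_pr (R : realType) n K (lam : 'I_K -> R) (S : 'I_K -> {set 'I_n})
    (P : config n -> 'I_K -> 'I_n -> R) (L : {set 'I_n}) :
  (0 < n)%N -> routing_policy S P -> (forall i, 0 <= lam i) -> \sum_i lam i = 1 ->
  L != set0 -> L != setT ->
  #|L|%:R / n%:R <= Asum S lam L -> ~ positive_recurrent lam S P.
Proof.
move=> hn hP hl hs hL0 hL1 hq hPR.
have [v0 hv0] := set0Pn _ hL0.
pose z : config n := [ffun _ => 0%N].
pose x0 := store z v0.
set q : R := #|L|%:R / n%:R.
have hz : balanced z by apply/forallP => u; apply/forallP => w; rewrite !ffunE.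
have hY0 : Yf R L x0 = 1 - q by rewrite /x0 Y_store Y_bal // hv0 /= mulr1n add0r.
have hq1 : q < 1.
  rewrite /q ltr_pdivrMr ?ltr0n // mul1r ltr_nat.
  by rewrite -[X in (_ < X)%N]card_ord -cardsT; apply: proper_card; rewrite properT.
have hq0 : 0 <= q by apply: divr_ge0; apply: ler0n.
set c := 1 - q.
have hc : 0 < c by rewrite /c; lra.
have hc1 : c <= 1 by rewrite /c; lra.
have hsv m : c / (m.+1)%:R <= surv lam S P m x0.
  have h1 := V_ge_Y hn hP hl hs hq m x0.
  have h2 := V_le L hn hP hl m x0.
  have h3 := surv_ge0 hP hl m x0.
  rewrite hY0 -/c ger0_norm in h1 h2; last exact: ltW.
  rewrite ler_pdivrMr ?ltr0Sn // -natr1.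
  have : (c + m%:R) * surv lam S P m x0 <= (m%:R + 1) * surv lam S P m x0.
    by apply: ler_wpM2r => //; lra.
  rewrite mulrC; lra.
have [B hB] := hPR x0.
have hb0 : 0 <= `|B| * 2 / c by apply: divr_ge0 => //; [apply: mulr_ge0 | apply: ltW].
have hk := archi_boundP hb0.
set k := Num.Def.archi_bound _ in hk.
have := hB (2 ^ k)%N.
have hH := harm R k.
have : c * (k%:R / 2) <= \sum_(m < 2 ^ k) surv lam S P m x0.
  apply: le_trans (_ : c * \sum_(m < 2 ^ k) ((m.+1)%:R : R)^-1 <= _).
    by apply: ler_wpM2l => //; apply: ltW.
  rewrite mulr_sumr; apply: ler_sum => m _; exact: hsv.
have : `|B| * 2 < c * k%:R.
  by have := hk; rewrite ltr_pdivrMr // [_ * c]mulrC.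
have := ler_norm B.
lra.
Qed.

Unset Implicit Arguments.

Theorem theorem2p3 (R : realType) (n K : nat) (S : 'I_K -> {set 'I_n})
    (lam : 'I_K -> R) :
  (0 < K)%N ->
  (forall i, S i != set0) ->
  \bigcup_(i < K) S i = setT ->
  (forall i, 0 < lam i) ->
  \sum_(i < K) lam i = 1 ->
  ~ (exists alpha : 'I_K -> 'I_n -> R,
        (forall i v, v \in S i -> 0 < alpha i v) /\
        (forall i, \sum_(v in S i) alpha i v = lam i) /\
        (forall l : 'I_n,
           \sum_(i < K) \sum_(v in S i) alpha i v * (v == l)%:R = n%:R^-1)) ->
  forall P : config n -> 'I_K -> 'I_n -> R,
    routing_policy S P -> ~ positive_recurrent lam S P.
Proof.
move=> hK hS hU hlam hsum hno P hP hPR.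
have hn : (0 < n)%N.
  have [v _] := set0Pn _ (hS (Ordinal hK)).
  exact: (leq_ltn_trans (leq0n v) (ltn_ord v)).
apply: hno.
have hl0 i : 0 <= lam i := ltW (hlam i).
have hstr : forall T : {set 'I_n}, T != set0 -> T != setT -> Asum S lam T < #|T|%:R / n%:R.
  move=> T h0 h1; rewrite ltNge; apply/negP => hle.
  exact: (not_pr hn hP hl0 hsum h0 h1 hle hPR).
have [alpha [a1 a2 a3 a4]] := pos_sol hn hS hlam hsum hstr.
exists alpha; split; first exact: a1.
split.
  move=> i; rewrite -(a3 i) [RHS](bigID (fun v => v \in S i)) /=.
  by rewrite [X in _ = _ + X]big1 ?addr0 // => v hv; apply: a2.
move=> l; rewrite -(a4 l); apply: eq_bigr => i _.
case hl: (l \in S i).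
  rewrite (bigD1 l) //= eqxx /= mulr1n mulr1 big1 ?addr0 // => v /andP [_ /negbTE ->].
  by rewrite /= mulr0n mulr0.
rewrite a2 ?hl // big1 // => v hv.
have /negbTE -> : v != l by apply/eqP => e; rewrite -e hv in hl.
by rewrite /= mulr0n mulr0.
Qed.
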